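(* Let $K,L,N$ be positive integers and $t$ an integer with $L=K-t$, and consider a $(K,L,M,N)$ multi-antenna coded caching system with $\frac{M}{N}=\frac{t}{K}$. Then the delivery time $$T^*=\frac{K-t}{t+L}=\frac{L}{K}$$ is achievable by a scheme with subpacketization number $\frac{K}{\gcd(K,t,L)}$.
   Context: $(K,L,M,N)$ multi-antenna coded caching system: a server holds $N$ files $W_1,\dots,W_N$, each of size one unit, and has $L$ transmit antennas; it serves $K$ single-antenna users over a MISO broadcast channel of capacity one file per unit time. User $k$ has a cache of size $M$ units ($0\le M\le N$). In the placement phase (before demands are known) the server fills caches with uncoded file content. In the delivery phase each user $k$ requests a file $W_{d_k}$; the server sends vectors $\mathbf{x}(\tau)\in\mathbb{C}^L$ and user $k$ receives $y_k(\tau)=\mathbf{h}_k^T\mathbf{x}(\tau)+w_k(\tau)$ with $\mathbf{h}_k\in\mathbb{C}^L$ its channel vector; all nodes have perfect channel knowledge, the channel vectors are generic, and the high-SNR regime is considered (noise neglected). A scheme is correct if every user recovers its requested file from its cache and received signals, for every demand vector. The subpacketization number is the number of equal-size subfiles into which each file is split; if each file is split into $F$ subfiles and the delivery consists of $S'$ transmissions each of size $1/F$ file, the delivery time is $T=S'/F$. ''Achievable'' means such a correct scheme exists for every demand vector with that delivery time. *)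

(* Defs.v *)
(* Model of a (K,L,M,N) multi-antenna coded caching system
   with uncoded placement and linear delivery over a MISO broadcast channel
   (high SNR, noise neglected). *)
From HB Require Import structures.
From mathcomp Require Import all_boot all_order all_algebra.
From mathcomp Require Import mpoly.
Set Implicit Arguments.
Unset Strict Implicit.
Unset Printing Implicit Defensive.
Import Order.TTheory GRing.Theory Num.Theory.
Local Open Scope ring_scope.

(* Subfile (n, f) = the f-th of the F equal-size subfiles of file W_n. *)
Definition subfile (N F : nat) := ('I_N * 'I_F)%type.

Definition placement (K N F : nat) := 'I_K -> {set subfile N F}.

(* Cache of size M units: each subfile has size 1/F, so #|Z k| / F <= M. *)
Definition cache_ok (K N F : nat) (M : rat) (Z : placement K N F) : Prop :=
  forall k : 'I_K, (#|Z k|%:R / F%:R <= M)%R.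

(* Linear delivery with S transmissions: transmission tau sends
   x(tau) = \sum_j W_j v_{tau,j} in C^L, with precoding vectors v_{tau,j}. *)
Definition precoder (C : Type) (L N F S : nat) := 'I_S -> subfile N F -> 'rV[C]_L.

Definition tx (C : comRingType) (L N F S : nat) (V : precoder C L N F S)
  (W : subfile N F -> C) (tau : 'I_S) : 'rV[C]_L :=
  \sum_(j : subfile N F) W j *: V tau j.

Definition rx (C : comRingType) (L N F S : nat) (V : precoder C L N F S)
  (h : 'rV[C]_L) (W : subfile N F -> C) (tau : 'I_S) : C :=
  \sum_(l < L) h 0 l * tx V W tau 0 l.

(* User k (channel vector h, cache Z_k, demand n) recovers file W_n:
   the received signals together with the cache contents determine every
   subfile of W_n, for all possible file contents. *)
Definition decodes (C : comRingType) (L N F S : nat) (V : precoder C L N F S)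
  (h : 'rV[C]_L) (Zk : {set subfile N F}) (n : 'I_N) : Prop :=
  forall W W' : subfile N F -> C,
    (forall j, j \in Zk -> W j = W' j) ->
    (forall tau, rx V h W tau = rx V h W' tau) ->
    forall f : 'I_F, W (n, f) = W' (n, f).

Definition delivery_ok (C : comRingType) (K L N F S : nat)
  (Z : placement K N F) (H : 'M[C]_(K, L)) (d : 'I_K -> 'I_N)
  (V : precoder C L N F S) : Prop :=
  forall k : 'I_K, decodes V (row k H) (Z k) (d k).

(* A property holds for generic channels: it holds outside the zero set of
   some nonzero polynomial in the K*L channel coefficients. *)
Definition generic_channel (C : comRingType) (K L : nat)
  (P : 'M[C]_(K, L) -> Prop) : Prop :=
  exists p : {mpoly C[K * L]}, p != 0 /\
    forall H : 'M[C]_(K, L), p.@[fun i => mxvec H 0 i] != 0 -> P H.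

(* Achievability of delivery time S/F with subpacketization F and cache M:
   a placement (independent of demands and channels) such that, for generic
   channels and every demand vector, a correct delivery with S transmissions
   of size 1/F exists. *)
Definition achievable (C : comRingType) (K L N : nat) (M : rat) (F S : nat) : Prop :=
  exists Z : placement K N F, cache_ok M Z /\
    generic_channel (fun H : 'M[C]_(K, L) =>
      forall d : 'I_K -> 'I_N, exists V : precoder C L N F S, delivery_ok Z H d V).

(* Main.v *)
Require Import Defs.
From HB Require Import structures.
From mathcomp Require Import all_boot all_order all_algebra.
From mathcomp Require Import mpoly.
From mathcomp Require Import zify ring lra.
Import Order.TTheory GRing.Theory Num.Theory.


Lemma count_rot (F c : nat) (P : pred nat) : 0 < F ->
  count (fun r => P ((r + c) %% F)) (iota 0 F) = count P (iota 0 F).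
Proof.
move=> F0.
have -> : (fun r => P ((r + c) %% F)) = preim (fun r => (r + c) %% F) P by [].
rewrite -count_map; apply/permP.
have U : uniq [seq (r + c) %% F | r <- iota 0 F].
  rewrite map_inj_in_uniq ?iota_uniq // => x y; rewrite !mem_iota /= !add0n => xF yF.
  move/eqP; rewrite eqn_modDr => /eqP; rewrite !modn_small //.
have S : {subset [seq (r + c) %% F | r <- iota 0 F] <= iota 0 F}.
  by move=> x /mapP [r _ ->]; rewrite mem_iota add0n ltn_pmod.
have [_ E] := uniq_min_size U S (eq_leq (esym (size_map _ _))).
by apply: uniq_perm; rewrite ?iota_uniq.
Qed.

Lemma count_period (F g : nat) (Q : pred nat) :
  (forall k, Q (k + F) = Q k) ->
  count Q (iota 0 (g * F)) = g * count Q (iota 0 F).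
Proof.
move=> HQ.
have HQ' : forall q k, Q (q * F + k) = Q k.
  elim=> [|q IH] k; first by rewrite mul0n add0n.
  by rewrite mulSn (addnC F) -addnA (addnC F) addnA HQ IH.
elim: g => [|g IH]; first by rewrite !mul0n.
rewrite mulSnr iotaD count_cat IH add0n.
have -> : iota (g*F) F = map (addn (g*F)) (iota 0 F) by rewrite -iotaDl addn0.
rewrite count_map mulSnr; congr (_ + _).
apply: eq_in_count => x _; by rewrite /preim /= HQ'.
Qed.

Lemma count_lt (a n : nat) : count (fun d => d < a) (iota 0 n) = minn a n.
Proof.
elim: n => [|n IH]; first by rewrite minn0.
rewrite -addn1 iotaD count_cat IH /= add0n addn0.
case: (ltnP n a) => H; rewrite addn1.
  by rewrite (minn_idPr H).
by rewrite (minn_idPl (leqW H)) addn0.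
Qed.

Lemma count_ge (a n : nat) : count (fun d => a <= d) (iota 0 n) = n - minn a n.
Proof.
rewrite -count_lt.
have E := count_predC (fun d => d < a) (iota 0 n); rewrite size_iota in E.
have -> : count (fun d => a <= d) (iota 0 n) = count (predC (fun d => d < a)) (iota 0 n).
  by apply: eq_count => x /=; rewrite -leqNgt.
by rewrite -{2}E addKn.
Qed.

Lemma card_ord_count (n : nat) (Q : pred nat) :
  #|[set k : 'I_n | Q k]| = count Q (iota 0 n).
Proof.
rewrite -sum1_card -sum1_count.
rewrite (eq_bigl (fun k : 'I_n => Q k)); last by move=> k; rewrite inE.
by rewrite -(big_mkord Q (fun _ => 1)) /index_iota subn0.
Qed.


Definition cached (F a k f : nat) : bool := (k + f) %% F < a.
Definition Aset (K F a f : nat) : {set 'I_K} := [set k : 'I_K | ~~ cached F a k f].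

Lemma card_Aset K F a b g f : 0 < F -> K = g * F -> F = a + b ->
  #|Aset K F a f| = g * b.
Proof.
move=> F0 hK hF; rewrite /Aset /cached.
rewrite (card_ord_count K (fun k => ~~ ((k + f) %% F < a))) hK.
rewrite count_period; last by move=> k; rewrite addnAC modnDr.
congr (_ * _).
rewrite (count_rot F f (fun d => ~~ (d < a))) //.
rewrite (eq_count (a2 := fun d => a <= d)); last by move=> x; rewrite -leqNgt.
by rewrite count_ge hF (minn_idPl (leq_addr _ _)) addKn.
Qed.

Lemma card_cached F a b k : 0 < F -> F = a + b ->
  #|[set f : 'I_F | cached F a k f]| = a.
Proof.
move=> F0 hF; rewrite /cached (card_ord_count F (fun f => (k + f) %% F < a)).
rewrite (eq_count (a2 := fun f => (f + k) %% F < a)); last by move=> x; rewrite addnC.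
rewrite (count_rot F k (fun d => d < a)) // count_lt hF.
by rewrite (minn_idPl (leq_addr _ _)).
Qed.

Lemma card_Z N F a b k : 0 < F -> F = a + b ->
  #|[set s : 'I_N * 'I_F | cached F a k s.2]| = N * a.
Proof.
move=> F0 hF.
have -> : [set s : 'I_N * 'I_F | cached F a k s.2] =
          setX [set: 'I_N] [set f : 'I_F | cached F a k f].
  by apply/setP => s; rewrite !inE.
by rewrite cardsX cardsT card_ord (card_cached _ _ b).
Qed.

Definition sig K1 F a f (i : nat) : 'I_K1.+1 := nth ord0 (enum (Aset K1.+1 F a f)) i.
Definition idx K1 L1 F a f (j : 'I_K1.+1) : 'I_L1.+1 :=
  inord (index j (enum (Aset K1.+1 F a f))).

Lemma sig_idx K1 L1 F a f (j : 'I_K1.+1) :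
  #|Aset K1.+1 F a f| = L1.+1 -> j \in Aset K1.+1 F a f ->
  sig K1 F a f (idx K1 L1 F a f j) = j.
Proof.
move=> hc hj; rewrite /sig /idx inordK; first by rewrite nth_index // mem_enum.
by rewrite -hc cardE index_mem mem_enum.
Qed.

Lemma idx_inj K1 L1 F a f (j k : 'I_K1.+1) :
  #|Aset K1.+1 F a f| = L1.+1 -> j \in Aset K1.+1 F a f -> k \in Aset K1.+1 F a f ->
  (idx K1 L1 F a f j == idx K1 L1 F a f k) = (j == k).
Proof.
move=> hc hj hk; apply/eqP/eqP => [E|->] //.
by rewrite -(sig_idx _ _ _ _ _ _ hc hj) E (sig_idx _ _ _ _ _ _ hc hk).
Qed.

Lemma sig_inj K1 L1 F a f (i i' : 'I_L1.+1) :
  #|Aset K1.+1 F a f| = L1.+1 -> (sig K1 F a f i == sig K1 F a f i') = (i == i').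
Proof.
move=> hc; rewrite /sig nth_uniq ?enum_uniq // -cardE hc //.
Qed.

Lemma sig_in K1 L1 F a f (i : 'I_L1.+1) :
  #|Aset K1.+1 F a f| = L1.+1 -> sig K1 F a f i \in Aset K1.+1 F a f.
Proof.
move=> hc; rewrite /sig -mem_enum mem_nth // -cardE hc //.
Qed.

Definition fsub K F1 a (k tau : nat) : 'I_F1.+1 := inord ((a + tau + (K - k)) %% F1.+1).

Lemma fsub_val K F1 a k tau : nat_of_ord (fsub K F1 a k tau) = (a + tau + (K - k)) %% F1.+1.
Proof. by rewrite /fsub inordK // ltn_pmod. Qed.

Lemma fsub_not_cached K F1 a b g k tau : K = g * F1.+1 -> F1.+1 = a + b ->
  k < K -> tau < b -> ~~ cached F1.+1 a k (fsub K F1 a k tau).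
Proof.
move=> hK hF hk ht; rewrite /cached fsub_val modnDmr -leqNgt.
have -> : k + (a + tau + (K - k)) = g * F1.+1 + (a + tau).
  rewrite -hK; lia.
by rewrite modnMDl modn_small ?leq_addr // hF ltn_add2l.
Qed.

Lemma fsub_cover K F1 a b g k (f : 'I_F1.+1) : K = g * F1.+1 -> F1.+1 = a + b ->
  k < K -> ~~ cached F1.+1 a k f ->
  ((k + f) %% F1.+1 - a < b) /\ fsub K F1 a k ((k + f) %% F1.+1 - a) = f.
Proof.
move=> hK hF hk; rewrite /cached -leqNgt => ha; split.
  by rewrite ltn_subLR // -hF ltn_pmod.
apply: val_inj; rewrite /= fsub_val subnKC // modnDml.
have -> : k + f + (K - k) = f + g * F1.+1.
  rewrite -hK; lia.
by rewrite addnC modnMDl modn_small.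
Qed.

Local Open Scope ring_scope.

Definition Hsub (C : fieldType) K1 L1 F a f (H : 'M[C]_(K1.+1, L1.+1)) : 'M[C]_L1.+1 :=
  \matrix_(i, l) H (sig K1 F a f i) l.
Arguments Hsub {C K1 L1} F a f H.

Definition vec (C : fieldType) K1 L1 F a f (H : 'M[C]_(K1.+1, L1.+1)) (j : 'I_K1.+1)
  : 'rV[C]_L1.+1 :=
  \row_l invmx (Hsub F a f H) l (idx K1 L1 F a f j).
Arguments vec {C K1 L1} F a f H j.

Lemma zf (C : fieldType) K1 L1 F a f (H : 'M[C]_(K1.+1, L1.+1)) (j k : 'I_K1.+1) :
  \det (Hsub F a f H) != 0 -> #|Aset K1.+1 F a f| = L1.+1 ->
  k \in Aset K1.+1 F a f -> j \in Aset K1.+1 F a f ->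
  \sum_l H k l * vec F a f H j 0 l = (k == j)%:R.
Proof.
move=> hd hc hk hj.
have U : Hsub F a f H \in unitmx by rewrite unitmxE unitfE.
have := congr1 (fun A : 'M[C]_L1.+1 => A (idx K1 L1 F a f k) (idx K1 L1 F a f j)) (mulmxV U).
rewrite /= !mxE (idx_inj _ _ _ _ _ _ _ hc hk hj) => <-.
apply: eq_bigr => l _; rewrite !mxE (sig_idx _ _ _ _ _ _ hc hk) //.
Qed.

Definition prec (C : fieldType) K1 L1 N F1 a b (H : 'M[C]_(K1.+1, L1.+1))
  (d : 'I_K1.+1 -> 'I_N) : precoder C L1.+1 N F1.+1 b :=
  fun tau s => \sum_(j : 'I_K1.+1 | (d j, fsub K1.+1 F1 a j tau) == s)
                 vec F1.+1 a (fsub K1.+1 F1 a j tau) H j.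
Arguments prec {C K1 L1 N} F1 a {b} H d.

Lemma rx_eq (C : fieldType) K1 L1 N F1 a b (H : 'M[C]_(K1.+1, L1.+1))
  (d : 'I_K1.+1 -> 'I_N) (h : 'rV[C]_L1.+1) (W : subfile N F1.+1 -> C) (tau : 'I_b) :
  rx (prec F1 a H d) h W tau =
  \sum_(j : 'I_K1.+1) W (d j, fsub K1.+1 F1 a j tau) *
     \sum_(l < L1.+1) h 0 l * vec F1.+1 a (fsub K1.+1 F1 a j tau) H j 0 l.
Proof.
have T : tx (prec F1 a H d) W tau = \sum_(j : 'I_K1.+1)
      W (d j, fsub K1.+1 F1 a j tau) *: vec F1.+1 a (fsub K1.+1 F1 a j tau) H j.
  symmetry; rewrite (partition_big (fun j => (d j, fsub K1.+1 F1 a j tau)) xpredT) //=.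
  apply: eq_bigr => s _; rewrite /prec scaler_sumr.
  by apply: eq_big => // j /eqP ->.
rewrite /rx T.
under eq_bigr => l _ do rewrite summxE mulr_sumr.
rewrite exchange_big /=; apply: eq_bigr => j _.
rewrite mulr_sumr; apply: eq_bigr => l _.
by rewrite mxE mulrCA.
Qed.

Lemma decode (C : fieldType) K1 L1 N F1 a b g (H : 'M[C]_(K1.+1, L1.+1))
  (d : 'I_K1.+1 -> 'I_N) (k : 'I_K1.+1) :
  K1.+1 = (g * F1.+1)%N -> L1.+1 = (g * b)%N -> F1.+1 = (a + b)%N ->
  (forall f : 'I_F1.+1, \det (Hsub F1.+1 a f H) != 0) ->
  decodes (@prec C K1 L1 N F1 a b H d) (row k H)
    [set s : 'I_N * 'I_F1.+1 | cached F1.+1 a k s.2] (d k).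
Proof.
move=> hK hL hF hdet W W' hZ hrx f.
have hc (f' : nat) : #|Aset K1.+1 F1.+1 a f'| = L1.+1.
  by rewrite hL (card_Aset _ _ _ b g).
have zfr (j : 'I_K1.+1) (f' : 'I_F1.+1) : k \in Aset K1.+1 F1.+1 a f' ->
    j \in Aset K1.+1 F1.+1 a f' ->
    \sum_l (row k H) 0 l * vec F1.+1 a f' H j 0 l = (k == j)%:R.
  move=> h1 h2; rewrite -(zf _ _ _ _ _ _ _ _ _ (hdet f') (hc f')) //.
  by apply: eq_bigr => l _; rewrite mxE.
have inA (j : 'I_K1.+1) (tau : 'I_b) :
    j \in Aset K1.+1 F1.+1 a (fsub K1.+1 F1 a j tau).
  rewrite inE; exact: (fsub_not_cached _ _ _ b g).
case: (boolP (cached F1.+1 a k f)) => hkf.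
  by apply: hZ; rewrite inE.
have [htb hf] := fsub_cover K1.+1 F1 a b g k f hK hF (ltn_ord k) hkf.
pose tau : 'I_b := Ordinal htb.
have := hrx tau; rewrite !rx_eq => /eqP; rewrite -subr_eq0 -sumrB (bigD1 k) //=.
have hk := inA k tau.
rewrite zfr // eqxx !mulr1.
rewrite [X in _ + X]big1 ?addr0.
  by rewrite subr_eq0 /= hf => /eqP.
move=> j hj.
case: (boolP (k \in Aset K1.+1 F1.+1 a (fsub K1.+1 F1 a j tau))) => hin.
  have hj' := inA j tau.
  rewrite zfr //.
  have -> : (k == j) = false by apply/eqP => E; rewrite E eqxx in hj.
  by rewrite !mulr0 subrr.
rewrite hZ ?subrr //.
by move: hin; rewrite !inE negbK.
Qed.

Local Open Scope ring_scope.

Definition Xsub (C : fieldType) K1 L1 F a f : 'M[{mpoly C[K1.+1 * L1.+1]}]_L1.+1 :=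
  \matrix_(i, l) 'X_(mxvec_index (sig K1 F a f i) l).

Lemma eval_X (C : fieldType) K1 L1 F a f (H : 'M[C]_(K1.+1, L1.+1)) :
  (\det (Xsub C K1 L1 F a f)).@[fun i => mxvec H 0 i] = \det (Hsub F a f H).
Proof.
rewrite -det_map_mx; congr (\det _).
apply/matrixP => i l; rewrite !mxE.
change (meval (fun i => mxvec H 0 i) 'X_(mxvec_index (sig K1 F a f i) l) = H (sig K1 F a f i) l).
by rewrite mevalXU mxvecE.
Qed.

Lemma construct (C : numClosedFieldType) K1 L1 N F1 a b g (M : rat) :
  K1.+1 = (g * F1.+1)%N -> L1.+1 = (g * b)%N -> F1.+1 = (a + b)%N ->
  M = (N * a)%:R / (F1.+1)%:R ->
  achievable C K1.+1 L1.+1 N M F1.+1 b.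
Proof.
move=> hK hL hF hM.
exists (fun k => [set s : subfile N F1.+1 | cached F1.+1 a k s.2]); split.
  by move=> k; rewrite (card_Z _ _ _ b) // hM.
exists (\prod_(f < F1.+1) \det (Xsub C K1 L1 F1.+1 a f)); split.
  apply/prodf_neq0 => f _.
  apply/eqP => E.
  pose H0 : 'M[C]_(K1.+1, L1.+1) := \matrix_(k, l) ((k == sig K1 F1.+1 a f l)%:R).
  have := eval_X C K1 L1 F1.+1 a f H0; rewrite E meval0.
  have -> : Hsub F1.+1 a f H0 = 1%:M.
    apply/matrixP => i l; rewrite !mxE sig_inj //.
    by rewrite hL (card_Aset _ _ _ b g).
  by rewrite det1 => /eqP; rewrite eq_sym oner_eq0.
move=> H hp d.
exists (@prec C K1 L1 N F1 a b H d) => k.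
apply: (decode C K1 L1 N F1 a b g H d k hK hL hF).
move=> f; move: hp; rewrite rmorph_prod => /prodf_neq0 /(_ f isT) hf.
by rewrite -(eval_X C K1 L1 F1.+1 a f H).
Qed.

Local Open Scope ring_scope.

Theorem theorem2 (C : numClosedFieldType) (K L N : nat) (t : int) (M : rat) :
  (0 < K)%N -> (0 < L)%N -> (0 < N)%N ->
  (L%:Z = K%:Z - t) ->
  0 <= M -> M <= N%:R ->
  M / N%:R = t%:~R / K%:R ->
  let F := (K %/ gcdn (gcdn K `|t|%N) L)%N in
  exists S : nat,
    S%:R / F%:R = (K%:~R - t%:~R) / (t%:~R + L%:R) :> rat /\
    S%:R / F%:R = L%:R / K%:R :> rat /\
    achievable C K L N M F S.
Proof.
case: K => // K1; case: L => // L1.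
move=> _ _ N0 hL M0 _ hMt F.
have t0 : 0 <= t.
  have : 0 <= t%:~R / (K1.+1)%:R :> rat by rewrite -hMt divr_ge0.
  by rewrite pmulr_lge0 ?invr_gt0 ?ltr0n // ler0z.
have [tn ht] : exists tn : nat, t = tn%:Z by exists `|t|%N; rewrite gez0_abs.
subst t.
have hK : K1.+1 = (tn + L1.+1)%N by lia.
pose g := gcdn (gcdn K1.+1 `|tn%:Z|%N) L1.+1.
have g0 : (0 < g)%N by rewrite gcdn_gt0 orbT.
have dK : (g %| K1.+1)%N := dvdn_trans (dvdn_gcdl _ _) (dvdn_gcdl _ _).
have dt : (g %| tn)%N := dvdn_trans (dvdn_gcdl _ _) (dvdn_gcdr _ _).
have dL : (g %| L1.+1)%N := dvdn_gcdr _ _.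
have eK : K1.+1 = (g * F)%N by rewrite /F -/g mulnC divnK.
have eT : tn = (g * (tn %/ g))%N by rewrite mulnC divnK.
have eL : L1.+1 = (g * (L1.+1 %/ g))%N by rewrite mulnC divnK.
set a := (tn %/ g)%N in eT. set b := (L1.+1 %/ g)%N in eL.
have hF : F = (a + b)%N.
  by apply/eqP; rewrite -(eqn_pmul2l g0) mulnDr -eK -eT -eL hK.
have b0 : (0 < b)%N by rewrite lt0n; apply/eqP => E; rewrite E muln0 in eL.
have [F1 eF1] : exists F1, F = F1.+1 by exists F.-1; rewrite prednK // hF; lia.
have gR : (g%:R : rat) != 0 by rewrite pnatr_eq0 -lt0n.
have FR : (F%:R : rat) != 0 by rewrite eF1 pnatr_eq0.
have NR : (N%:R : rat) != 0 by rewrite pnatr_eq0 -lt0n.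
have bF : (b%:R / F%:R : rat) = (L1.+1)%:R / (K1.+1)%:R.
  rewrite eL eK !natrM; field; by rewrite gR FR.
exists b; split; [|split] => //.
  rewrite bF.
  change ((L1.+1)%:R / (K1.+1)%:R = ((K1.+1)%:R - tn%:R) / (tn%:R + (L1.+1)%:R) :> rat).
  by rewrite hK natrD (addrC (tn%:R)) addrK.
rewrite eF1; apply: (construct C K1 L1 N F1 a b g).
- by rewrite -eF1.
- exact: eL.
- by rewrite -eF1.
rewrite -eF1.
have : M = N%:R * ((tn%:Z)%:~R / (K1.+1)%:R).
  by rewrite -hMt mulrC divfK.
move=> ->; rewrite eK eT !natrM; field; by rewrite gR FR.
Qed.
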